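(* Let $\kappa$ be an uncountable cardinal and $X$, $Y$ Banach spaces. If $X$ and $Y$ are both $\mathrm{ASQ}_{<\kappa}$, then the projective tensor product $X\widehat{\otimes}_\pi Y$ is $\mathrm{ASQ}_{<\kappa}$. If $X$ and $Y$ are both $\mathrm{SQ}_{<\kappa}$, then $X\widehat{\otimes}_\pi Y$ is $\mathrm{SQ}_{<\kappa}$.
   Context: $X\widehat{\otimes}_\pi Y$ is the completion of $X\otimes Y$ under the norm $\|u\|=\inf\{\sum_i\|x_i\|\|y_i\|: u=\sum_i x_i\otimes y_i\}$. A Banach space $Z$ is $\mathrm{ASQ}_{<\kappa}$ if for every set $A\subset S_Z$ with $|A|<\kappa$ and every $\varepsilon>0$ there exists $y\in S_Z$ with $\|x\pm y\|\le 1+\varepsilon$ for all $x\in A$; $Z$ is $\mathrm{SQ}_{<\kappa}$ if for every such $A$ there exists $y\in S_Z$ with $\|x\pm y\|\le 1$ for all $x\in A$. *)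

(* Defs.v *)
From HB Require Import structures.
From mathcomp Require Import all_boot all_order all_algebra.
From mathcomp Require Import all_classical all_reals all_analysis.
Set Implicit Arguments. Unset Strict Implicit. Unset Printing Implicit Defensive.
Import Order.TTheory GRing.Theory Num.Theory.
Import numFieldNormedType.Exports.
Local Open Scope classical_set_scope.
Local Open Scope ring_scope.

(* A cardinal kappa is represented by a type K (kappa = |K|).
   |A| < kappa  :=  A injects into K but K does not inject into A. *)
Definition card_lt_type (T K : Type) (A : set T) : Prop :=
  (A #<= [set: K])%card /\ ~ ([set: K] #<= A)%card.

Definition uncountable_card (K : Type) : Prop := ~ countable [set: K].

Definition ASQ_lt (R : realType) (K : Type) (Z : normedModType R) : Prop :=
  forall (A : set Z), A `<=` [set x | `|x| = 1] -> card_lt_type K A ->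
  forall eps : R, 0 < eps ->
  exists y : Z, `|y| = 1 /\
    (forall x, A x -> `|x + y| <= 1 + eps /\ `|x - y| <= 1 + eps).

Definition SQ_lt (R : realType) (K : Type) (Z : normedModType R) : Prop :=
  forall (A : set Z), A `<=` [set x | `|x| = 1] -> card_lt_type K A ->
  exists y : Z, `|y| = 1 /\
    (forall x, A x -> `|x + y| <= 1 /\ `|x - y| <= 1).

(* Finite tensors are represented by finite sequences of pairs
   s = [(x_1,y_1); ...; (x_n,y_n)] standing for sum_i x_i (x) y_i. *)
Definition tsum (R : realType) (X Y Z : normedModType R) (t : X -> Y -> Z)
  (s : seq (X * Y)) : Z := \sum_(p <- s) t p.1 p.2.

Definition pcost (R : realType) (X Y : normedModType R) (s : seq (X * Y)) : R :=
  \sum_(p <- s) (`|p.1| * `|p.2|).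

(* (Z, t) is the projective tensor product X (^)_pi Y, i.e. the completion of
   the algebraic tensor product X (x) Y (realised as span t(X,Y) in Z) under
   the projective norm:
   - t is bilinear;
   - the induced map X (x) Y -> Z is injective: a formal sum mapped to 0 is
     annihilated by every bilinear form, i.e. is the zero tensor;
   - on span t(X,Y) the norm of Z is the projective norm
       ||u|| = inf { sum ||x_i|| ||y_i|| : u = sum x_i (x) y_i };
   - span t(X,Y) is dense in Z (Z is complete by its type). *)
Record proj_tensor (R : realType) (X Y : normedModType R)
    (Z : completeNormedModType R) (t : X -> Y -> Z) : Prop := {
  pt_linl : forall y, linear (fun x => t x y);
  pt_linr : forall x, linear (t x);
  pt_inj : forall s : seq (X * Y), tsum t s = 0 ->
    forall B : X -> Y -> R, (forall y, linear (fun x => B x y)) ->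
      (forall x, linear (B x)) -> \sum_(p <- s) B p.1 p.2 = 0;
  pt_norm_lb : forall s s' : seq (X * Y), tsum t s' = tsum t s ->
    `|tsum t s| <= pcost s';
  pt_norm_approx : forall (s : seq (X * Y)) (e : R), 0 < e ->
    exists s' : seq (X * Y), tsum t s' = tsum t s /\ pcost s' <= `|tsum t s| + e;
  pt_dense : forall (z : Z) (e : R), 0 < e ->
    exists s : seq (X * Y), `|z - tsum t s| < e
}.

(* Main.v *)
Require Import Defs.
From HB Require Import structures.
From mathcomp Require Import all_boot all_order all_algebra.
From mathcomp Require Import all_classical all_reals all_analysis.
From mathcomp Require Import lra.
Set Implicit Arguments. Unset Strict Implicit. Unset Printing Implicit Defensive.
Import Order.TTheory GRing.Theory Num.Theory.
Import numFieldNormedType.Exports.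
Local Open Scope classical_set_scope.
Local Open Scope ring_scope.

Section CardAux.
Local Open Scope card_scope.
Lemma card_le_of_fun T U (A : set T) (B : set U) (f : T -> U) :
  set_fun A B f -> set_inj A f -> A #<= B.
Proof.
move=> fAB fi; have : $|{injfun A >-> B}| by apply/injfunPex; exists f.
by case=> g; exact: inj_card_le g.
Qed.

Lemma card_le_fun T U (A : set T) (B : set U) (u0 : U) :
  A #<= B -> exists f : T -> U, set_fun A B f /\ set_inj A f.
Proof.
elim/Ppointed: U => U in B u0 *; first by case: (no u0).
move=> /pcard_leP[g]; exists g; split => //.
Qed.

End CardAux.

Section CardMain.
Local Open Scope card_scope.
Section InfProd.
Variables (T : Type) (A : set T).

Definition goodG (G : set ((T * nat) * T)) :=
 [/\ (forall p b c, G (p,b) -> G (p,c) -> b = c),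
     (forall p q b, G (p,b) -> G (q,b) -> p = q) &
     (forall p b, G (p,b) -> [/\ A p.1, (forall n, exists c, G ((p.1,n),c)) &
                   exists q c, q.1 = b /\ G (q,c)])].

Lemma infinite_prod_le : infinite_set A -> A `*` [set: nat] #<= A.
Proof.
move=> Ainf.
have [u0 Au0] := infinite_setN0 Ainf.
have [G0 [PG0 G0max]] : exists G, goodG G /\ forall B, G `<` B -> ~ goodG B.
  apply: Zorn_bigcup => F FP Ftot; split.
  - move=> p b c [X FX Xb] [Y FY Yc].
    case: (Ftot X Y FX FY) => [XY|YX].
      by have [f _ _] := FP Y FY; exact: f (XY _ Xb) Yc.
    by have [f _ _] := FP X FX; exact: f Xb (YX _ Yc).
  - move=> p q b [X FX Xb] [Y FY Yc].
    case: (Ftot X Y FX FY) => [XY|YX].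
      by have [_ f _] := FP Y FY; exact: f (XY _ Xb) Yc.
    by have [_ f _] := FP X FX; exact: f Xb (YX _ Yc).
  - move=> p b [X FX Xb]; have [_ _ d] := FP X FX.
    have [Ap hn [q [c [qb Gqc]]]] := d p b Xb; split => //.
      by move=> n; have [c' ?] := hn n; exists c'; exists X.
    by exists q, c; split => //; exists X.
have [f0 i0 d0] := PG0.
pose D := [set a | exists q c, q.1 = a /\ G0 (q,c)].
have DA : D `<=` A by move=> a [q [c [<- Gqc]]]; have [] := d0 _ _ Gqc.
have Ffin : finite_set (A `\` D).
  apply: contrapT => /infiniteP /(card_le_fun u0) [h [hF hI]].
  pose G' := G0 `|` [set x | exists i n, x = ((h i, n), h (pickle (i,n)))].
  have hD i : ~ D (h i) by have [] := hF i I.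
  have hA i : A (h i) by have [] := hF i I.
  have hinj i j : h i = h j -> i = j by move=> e; apply: hI; rewrite ?inE.
  apply: (G0max G'); last first.
    split.
    - move=> p b c [Gb|[i [n /pair_equal_spec[-> ->]]]] [Gc|[j [m /pair_equal_spec[e1 e2]]]].
      + exact: f0 Gb Gc.
      + by exfalso; apply: (hD j); exists p, b; split => //; rewrite e1.
      + by exfalso; apply: (hD i); rewrite /D /=; exists (h i, n), c.
      + by move: e1 => /pair_equal_spec[/hinj -> ->]; rewrite e2.
    - move=> p q b [Gb|[i [n /pair_equal_spec[-> ->]]]] [Gc|[j [m /pair_equal_spec[e1 e2]]]].
      + exact: i0 Gb Gc.
      + exfalso; apply: (hD (pickle (j, m))); rewrite -e2 /D /=.
        by have [_ _ [q' [c' [? ?]]]] := d0 _ _ Gb; exists q', c'.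
      + exfalso; apply: (hD (pickle (i, n)));
        by have [_ _ [q' [c' [? ?]]]] := d0 _ _ Gc; exists q', c'.
      + by rewrite e1; move: e2 => /hinj/(pcan_inj pickleK) [-> ->].
    - move=> p b [Gb|[i [n /pair_equal_spec[-> ->]]]].
        have [Ap hn [q [c [qb Gqc]]]] := d0 _ _ Gb; split => //.
          by move=> m; have [c' ?] := hn m; exists c'; left.
        by exists q, c; split => //; left.
      split => //=.
        by move=> m; exists (h (pickle (i, m))); right; exists i, m.
      exists (h (pickle (i, n)), 0%N), (h (pickle (pickle (i, n), 0%N))).
      by split => //; right; exists (pickle (i, n)), 0%N.
  split; first by move=> x Gx; left.
  move=> /(_ ((h 0%N, 0%N), h (pickle (0%N, 0%N)))) H.
  have /H Gx : G' ((h 0%N, 0%N), h (pickle (0%N, 0%N))) by right; exists 0%N, 0%N.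
  by apply: (hD 0%N); exists (h 0%N, 0%N), (h (pickle (0%N, 0%N))).
have Dinf : infinite_set D.
  move=> Dfin; apply: Ainf; have -> : A = D `|` (A `\` D).
    by apply/seteqP; split => [a Aa|a [/DA//|[]//]]; have [Da|nDa] := pselect (D a); [left|right].
  by rewrite finite_setU.
have [a0 Da0] := infinite_setN0 Dinf.
have [V HV] : {V : T * nat -> T & forall p, D p.1 -> G0 (p, V p)}.
  apply: (@choice _ _ (fun p c => D p.1 -> G0 (p, c))) => -[a n].
  have [[q [c [qa Gqc]]]|nD] := pselect (D a); last by exists u0.
  have [_ hn _] := d0 _ _ Gqc; have [c' Gc'] := hn n.
  by exists c' => _; rewrite -qa.
have /countable_injP [e eI] : countable (A `\` D) by exact: finite_set_countable.
pose g (p : T * nat) := if `[< D p.1 >] then V (p.1, (2 * p.2)%N)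
  else V (a0, (2 * pickle (e p.1, p.2)).+1).
apply: (@card_le_of_fun _ _ _ _ g).
  move=> [a n] [/= Aa _]; rewrite /g /=.
  case: ifPn => [/asboolP Da|_].
    have := HV (a, (2 * n)%N) Da; move=> /d0 [_ _ /DA]; exact.
  have := HV (a0, (2 * pickle (e a, n)).+1) Da0; move=> /d0 [_ _ /DA]; exact.
move=> [a n] [a' n'] /set_mem [/= Aa _] /set_mem [/= Aa' _]; rewrite /g /=.
case: ifPn => [/asboolP Da|/asboolP nDa]; case: ifPn => [/asboolP Da'|/asboolP nDa'] => E.
- have H1 := HV (a, (2 * n)%N) Da; rewrite E in H1.
  have [-> /eqP] := i0 _ _ _ H1 (HV (a', (2 * n')%N) Da').
  by rewrite eqn_mul2l /= => /eqP ->.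
- have H1 := HV (a, (2 * n)%N) Da; rewrite E in H1.
  have [_ /(congr1 odd)] := i0 _ _ _ H1 (HV (a0, (2 * pickle (e a', n')).+1) Da0).
  by rewrite /= !oddM.
- have H1 := HV (a0, (2 * pickle (e a, n)).+1) Da0; rewrite E in H1.
  have [_ /(congr1 odd)] := i0 _ _ _ H1 (HV (a', (2 * n')%N) Da').
  by rewrite /= !oddM.
- have H1 := HV (a0, (2 * pickle (e a, n)).+1) Da0; rewrite E in H1.
  have E2 := i0 _ _ _ H1 (HV (a0, (2 * pickle (e a', n')).+1) Da0).
  have /eqP := congr1 snd E2; rewrite /= eqSS eqn_mul2l /= => /eqP /(pcan_inj pickleK) [ea ->].
  by congr pair; apply: eI => //; rewrite inE.
Qed.

End InfProd.


Lemma card_lt_of_prod K T U (A : set T) (C : set U) : uncountable_card K ->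
  card_lt_type K A -> C #<= A `*` [set: nat] -> card_lt_type K C.
Proof.
move=> unK [AK nKA] CA.
suff [PK nKP] : A `*` [set: nat] #<= [set: K] /\ ~ ([set: K] #<= A `*` [set: nat]).
  split; first exact: card_le_trans CA PK.
  by move=> KC; apply: nKP; exact: card_le_trans KC CA.
have [Afin|Ainf] := pselect (finite_set A); last first.
  have PA := infinite_prod_le Ainf; split; first exact: card_le_trans PA AK.
  by move=> KP; apply: nKA; exact: card_le_trans KP PA.
have cP : countable (A `*` [set: nat]).
  have /pcard_injP [e eI] := finite_set_countable Afin.
  apply: (@card_le_of_fun _ _ _ _ (fun p => pickle (e p.1, p.2))) => //.
  move=> [a n] [a' n'] /set_mem [/= Aa _] /set_mem [/= Aa' _] /(pcan_inj pickleK) [ea ->].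
  by congr pair; apply: eI => //; rewrite inE.
have NK : [set: nat] #<= [set: K].
  apply/infiniteP => Kfin; apply: unK; exact: finite_set_countable.
split; first exact: card_le_trans cP NK.
by move=> KP; apply: unK; exact: card_le_trans KP cP.
Qed.

End CardMain.

Section HB.
Variables (R : realType) (X : normedModType R) (x0 : X).

Definition goodF (G : set (X * R)) :=
  [/\ (forall x a b, G (x,a) -> G (x,b) -> a = b),
      (forall x a y b c, G (x,a) -> G (y,b) -> G (c *: x + y, c * a + b)),
      (forall x a, G (x,a) -> a <= `|x|) &
      (forall p, G p -> G (x0, `|x0|))].

Lemma goodF0 G : goodF G -> forall x a, G (x,a) -> G (0,0).
Proof.
move=> [_ cl _ _] x a Gx; have := cl _ _ _ _ (-1) Gx Gx.
by rewrite scaleN1r mulN1r !addNr.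
Qed.

Lemma goodFZ G : goodF G -> forall x a c, G (x,a) -> G (c *: x, c * a).
Proof.
move=> gG x a c Gx; have [_ cl _ _] := gG.
by have := cl _ _ _ _ c Gx (goodF0 gG Gx); rewrite !addr0.
Qed.

Lemma goodFD G : goodF G -> forall x a y b, G (x,a) -> G (y,b) -> G (x + y, a + b).
Proof.
move=> [_ cl _ _] x a y b Gx Gy.
by have := cl _ _ _ _ 1 Gx Gy; rewrite scale1r mul1r.
Qed.

Lemma hahn_banach : exists f : X -> R,
  [/\ (forall c x y, f (c *: x + y) = c * f x + f y), f x0 = `|x0| &
      forall x, f x <= `|x|].
Proof.
have [G [gG Gmax]] : exists G, goodF G /\ forall B, G `<` B -> ~ goodF B.
  apply: Zorn_bigcup => F FP Ftot; split.
  - move=> x a b [U FU Ua] [V FV Vb].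
    case: (Ftot U V FU FV) => [UV|VU].
      by have [f _ _ _] := FP V FV; exact: f (UV _ Ua) Vb.
    by have [f _ _ _] := FP U FU; exact: f Ua (VU _ Vb).
  - move=> x a y b c [U FU Ua] [V FV Vb].
    case: (Ftot U V FU FV) => [UV|VU].
      by have [_ f _ _] := FP V FV; exists V => //; exact: f (UV _ Ua) Vb.
    by have [_ f _ _] := FP U FU; exists U => //; exact: f Ua (VU _ Vb).
  - by move=> x a [U FU Ua]; have [_ _ f _] := FP U FU; exact: f Ua.
  - by move=> p [U FU Up]; have [_ _ _ f] := FP U FU; exists U => //; exact: f Up.
have [f0 cl dom pt] := gG.
have Gx0 : G (x0, `|x0|).
  apply: contrapT => nG.
  pose G0 := [set p : X * R | exists c, p = (c *: x0, c * `|x0|)].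
  have G0x0 : G0 (x0, `|x0|) by exists 1; rewrite scale1r mul1r.
  apply: (Gmax G0).
    split; first by move=> p /pt.
    by move=> /(_ _ G0x0).
  split.
  - move=> x a b [c /pair_equal_spec [-> ->]] [c' /pair_equal_spec [e ->]].
    have [->|x0n0] := eqVneq x0 0; first by rewrite normr0 !mulr0.
    move/eqP: e; rewrite -subr_eq0 -scalerBl scaler_eq0 (negbTE x0n0) orbF subr_eq0.
    by move/eqP ->.
  - move=> x a y b c [c1 /pair_equal_spec [-> ->]] [c2 /pair_equal_spec [-> ->]].
    by exists (c * c1 + c2); rewrite scalerDl scalerA mulrDl mulrA.
  - move=> x a [c /pair_equal_spec [-> ->]].
    by rewrite normrZ ler_wpM2r // ler_norm.
  - by [].
have G00 : G (0, 0) := goodF0 gG Gx0.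
have Gtot : forall z, exists a, G (z, a).
  move=> z; apply: contrapT => nz.
  have nzG a : ~ G (z, a) by move=> Gz; apply: nz; exists a.
  pose Lo := [set r | exists d a, G (d, a) /\ r = a - `|d - z|].
  have key d1 a1 d2 a2 : G (d1, a1) -> G (d2, a2) -> a1 - `|d1 - z| <= `|d2 + z| - a2.
    move=> G1 G2; have := dom _ _ (goodFD gG G1 G2).
    have := ler_normD (d1 - z) (d2 + z).
    have -> : d1 - z + (d2 + z) = d1 + d2 by rewrite addrACA addNr addr0.
    lra.
  have Lo0 : Lo !=set0 by exists (0 - `|0 - z|), 0, 0.
  have Loub : has_ubound Lo.
    by exists (`|0 + z| - 0) => r [d [a [Gd ->]]]; exact: key.
  pose c := sup Lo.
  have cge d a : G (d, a) -> a - `|d - z| <= c.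
    by move=> Gd; apply: ub_le_sup => //; exists d, a.
  have cle d a : G (d, a) -> c <= `|d + z| - a.
    by move=> Gd; apply: ge_sup => // r [d' [a' [Gd' ->]]]; exact: key.
  pose G' := [set p : X * R | exists d a t, G (d, a) /\ p = (d + t *: z, a + t * c)].
  have GG' : G `<=` G'.
    by move=> [d a] Gd; exists d, a, 0; rewrite scale0r mul0r !addr0.
  apply: (Gmax G').
    split => // H; apply: (nzG c); apply: H.
    by exists 0, 0, 1; rewrite scale1r mul1r !add0r.
  split.
  - move=> x a b [d [a1 [t [Gd /pair_equal_spec [-> ->]]]]].
    move=> [d' [a2 [t' [Gd' /pair_equal_spec [e ->]]]]].
    have [tt|tt] := eqVneq t t'.
      rewrite -tt in e *; have dd : d = d' by apply: (addIr (t *: z)).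
      rewrite dd in Gd.
      by rewrite (f0 _ _ _ Gd Gd').
    exfalso; apply: (nzG ((t - t')^-1 * (- a1 + a2) + 0)).
    have -> : z = (t - t')^-1 *: (- d + d') + 0.
      have -> : - d + d' = (t - t') *: z.
        have ed' : d' = d + t *: z - t' *: z by rewrite e addrK.
        by rewrite ed' addrA addKr scalerBl.
      by rewrite addr0 scalerA mulVf ?scale1r // subr_eq0.
    apply: (cl _ _ _ _ _ _ G00); have := cl _ _ _ _ (-1) Gd Gd'.
    by rewrite scaleN1r mulN1r.
  - move=> x a y b k [d [a1 [t [Gd /pair_equal_spec [-> ->]]]]].
    move=> [d' [a2 [t' [Gd' /pair_equal_spec [-> ->]]]]].
    exists (k *: d + d'), (k * a1 + a2), (k * t + t'); split; first exact: cl.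
    congr pair.
      by rewrite scalerDr scalerA scalerDl addrACA.
    by rewrite mulrDr mulrA mulrDl addrACA.
  - move=> x a [d [a1 [t [Gd /pair_equal_spec [-> ->]]]]].
    have [t0|tn0] := eqVneq t 0.
      by rewrite t0 scale0r mul0r !addr0; exact: dom Gd.
    have [tpos|tneg] := ltP 0 t.
      have := cle _ _ (goodFZ gG t^-1 Gd).
      have -> : t^-1 *: d + z = t^-1 *: (d + t *: z).
        by rewrite scalerDr scalerA mulVf // scale1r.
      rewrite normrZ gtr0_norm ?invr_gt0 // => h.
      have := ler_wpM2l (ltW tpos) h.
      rewrite mulrBr !mulrA mulfV // !mul1r; lra.
    have tlt : t < 0 by rewrite lt_neqAle tn0 tneg.
    have := cge _ _ (goodFZ gG (- t)^-1 Gd).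
    have -> : (- t)^-1 *: d - z = (- t)^-1 *: (d + t *: z).
      by rewrite scalerDr scalerA invrN mulNr mulVf // scaleN1r.
    have ntpos : 0 < - t by rewrite oppr_gt0.
    rewrite normrZ gtr0_norm ?invr_gt0 // => h.
    have := ler_wpM2l (ltW ntpos) h.
    rewrite mulrBr !mulrA mulfV ?oppr_eq0 // !mul1r mulNr; lra.
  - by move=> p _; apply: GG'.
have [f Hf] := choice Gtot.
exists f; split.
- by move=> k x y; apply: f0 (Hf _) (cl _ _ _ _ k (Hf x) (Hf y)).
- exact: f0 (Hf _) Gx0.
- by move=> x; exact: dom (Hf x).
Qed.
End HB.

Lemma zmod_id4 (V : zmodType) (a b c d : V) :
  (a + b + (c + d)) + (a - b - (c - d)) = (a + d) *+ 2.
Proof.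
rewrite opprB addrACA mulr2n.
have -> : a + b + (a - b) = a + a by rewrite addrACA subrr addr0.
have -> : c + d + (d - c) = d + d by rewrite [c + d]addrC addrACA subrr addr0.
by rewrite addrACA.
Qed.

Lemma lim_le (R : realType) (x y K : R) :
  (forall n : nat, x <= y + K * (n.+1%:R)^-1) -> x <= y.
Proof.
move=> H; apply/ler_addgt0Pr => e e0.
have K0 : 0 <= `|K| by [].
pose n := Num.truncn (`|K| / e).
have hn : `|K| / e < n.+1%:R := truncnS_gt _.
have np : 0 < n.+1%:R :> R by rewrite ltr0n.
apply: (le_trans (H n)); rewrite lerD2l.
apply: (le_trans (ler_norm _)); rewrite normrM normfV (gtr0_norm np).
rewrite ler_pdivrMr // mulrC -ler_pdivrMr //.
by apply: ltW.
Qed.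

Lemma dbl0 (V : zmodType) (x : V) : x = x + x -> x = 0.
Proof. by move/(congr1 (fun v => v - x)); rewrite subrr addrK. Qed.

Definition nrm (R : realType) (V : normedModType R) (x : V) := `|x|^-1 *: x.

Section Tensor.
Variables (R : realType) (X Y : normedModType R) (Z : completeNormedModType R)
  (t : X -> Y -> Z) (Ht : proj_tensor t).

Lemma tL y a x x' : t (a *: x + x') y = a *: t x y + t x' y.
Proof. exact: (pt_linl Ht y a x x'). Qed.
Lemma tR x a y y' : t x (a *: y + y') = a *: t x y + t x y'.
Proof. exact: (pt_linr Ht x a y y'). Qed.

Lemma t0l y : t 0 y = 0.
Proof.
by apply: dbl0; have := tL y 1 0 0; rewrite !scale1r addr0; apply.
Qed.
Lemma t0r x : t x 0 = 0.
Proof.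
by apply: dbl0; have := tR x 1 0 0; rewrite !scale1r addr0; apply.
Qed.
Lemma tDl y x x' : t (x + x') y = t x y + t x' y.
Proof. by have := tL y 1 x x'; rewrite !scale1r. Qed.
Lemma tDr x y y' : t x (y + y') = t x y + t x y'.
Proof. by have := tR x 1 y y'; rewrite !scale1r. Qed.
Lemma tZl y a x : t (a *: x) y = a *: t x y.
Proof. by have := tL y a x 0; rewrite !addr0 t0l addr0. Qed.
Lemma tZr x a y : t x (a *: y) = a *: t x y.
Proof. by have := tR x a y 0; rewrite !addr0 t0r addr0. Qed.
Lemma tNl y x : t (- x) y = - t x y.
Proof. by rewrite -scaleN1r tZl scaleN1r. Qed.
Lemma tNr x y : t x (- y) = - t x y.
Proof. by rewrite -scaleN1r tZr scaleN1r. Qed.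
Lemma tBl y x x' : t (x - x') y = t x y - t x' y.
Proof. by rewrite tDl tNl. Qed.
Lemma tBr x y y' : t x (y - y') = t x y - t x y'.
Proof. by rewrite tDr tNr. Qed.

Lemma tsum_cons p s : tsum t (p :: s) = t p.1 p.2 + tsum t s.
Proof. by rewrite /tsum big_cons. Qed.
Lemma pcost_cons (p : X * Y) s : pcost (p :: s) = `|p.1| * `|p.2| + pcost s.
Proof. by rewrite /pcost big_cons. Qed.
Lemma tsum_nil : tsum t [::] = 0.
Proof. by rewrite /tsum big_nil. Qed.
Lemma pcost_nil : @pcost R X Y [::] = 0.
Proof. by rewrite /pcost big_nil. Qed.

Lemma norm_tsum_le s : `|tsum t s| <= pcost s.
Proof. exact: (pt_norm_lb Ht (s:=s) (s':=s)). Qed.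

Lemma norm_t_le x y : `|t x y| <= `|x| * `|y|.
Proof.
have := norm_tsum_le [:: (x, y)].
by rewrite tsum_cons pcost_cons tsum_nil pcost_nil !addr0.
Qed.

Lemma norm_t x y : `|t x y| = `|x| * `|y|.
Proof.
apply/eqP; rewrite eq_le norm_t_le /=.
have [f [fl fx fn]] := hahn_banach x.
have [g [gl gy gn]] := hahn_banach y.
pose B a b := f a * g b.
have Bl b : linear (fun a => B a b) by move=> c u v /=; rewrite /B fl mulrDl -mulrA.
have Br a : linear (B a) by move=> c u v /=; rewrite /B gl mulrDr mulrA (mulrC (f a)) -mulrA.
have fa a : `|f a| <= `|a|.
  rewrite ler_norml fn andbT lerNl.
  have := fn (- a); rewrite normrN.
  have -> : f (- a) = - f a.
    by have := fl (-1) a 0; rewrite scaleN1r addr0 mulN1r => ->; rewrite (_ : f 0 = 0) ?addr0 //;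
      apply: dbl0; have := fl 1 0 0; rewrite scale1r addr0 mul1r; apply.
  by [].
have ga b : `|g b| <= `|b|.
  rewrite ler_norml gn andbT lerNl.
  have := gn (- b); rewrite normrN.
  have -> : g (- b) = - g b.
    by have := gl (-1) b 0; rewrite scaleN1r addr0 mulN1r => ->; rewrite (_ : g 0 = 0) ?addr0 //;
      apply: dbl0; have := gl 1 0 0; rewrite scale1r addr0 mul1r; apply.
  by [].
have key s' : tsum t s' = tsum t [:: (x, y)] -> `|x| * `|y| <= pcost s'.
  move=> es.
  have z0 : tsum t (s' ++ [:: (- x, y)]) = 0.
    by rewrite /tsum big_cat /= -/(tsum t s') es tsum_cons tsum_nil big_seq1 /= addr0 tNl subrr.
  have := pt_inj Ht z0 Bl Br; rewrite big_cat big_seq1 /= /B.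
  have -> : f (- x) = - f x.
    by have := fl (-1) x 0; rewrite scaleN1r addr0 mulN1r => ->; rewrite (_ : f 0 = 0) ?addr0 //;
      apply: dbl0; have := fl 1 0 0; rewrite scale1r addr0 mul1r; apply.
  rewrite fx gy mulNr => /eqP; rewrite addr_eq0 opprK => /eqP <-.
  rewrite /pcost; elim: s' {es z0} => [|p s' IH]; first by rewrite !big_nil.
  rewrite !big_cons; apply: lerD => //.
  apply: (le_trans (ler_norm _)); rewrite normrM.
  by apply: ler_pM => //.
apply/ler_addgt0Pr => e e0.
have [s' [es' hs']] := pt_norm_approx Ht [:: (x, y)] e0.
apply: (le_trans (key _ es')).
by move: hs'; rewrite tsum_cons tsum_nil addr0.
Qed.


Lemma simple_sq (x1 u : X) (y1 v : Y) (al : R) :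
  `|u + x1| <= al -> `|u - x1| <= al -> `|v + y1| <= al -> `|v - y1| <= al ->
  `|t u v + t x1 y1| <= al ^+ 2.
Proof.
move=> h1 h2 h3 h4.
have al0 : 0 <= al by apply: le_trans h1.
have E : t (u + x1) (v + y1) + t (u - x1) (v - y1) = (t u v + t x1 y1) *+ 2.
  by rewrite tDl tBl !tBr !tDr zmod_id4.
have := ler_normD (t (u + x1) (v + y1)) (t (u - x1) (v - y1)).
rewrite E normrMn => h.
have := le_trans h (lerD (norm_t_le _ _) (norm_t_le _ _)).
have := ler_pM (normr_ge0 _) (normr_ge0 _) h1 h3.
have := ler_pM (normr_ge0 _) (normr_ge0 _) h2 h4.
rewrite mulr2n expr2; lra.
Qed.

Lemma term_bound (x1 : X) (y1 : Y) (al : R) (x : X) (y : Y) :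
  0 <= al ->
  (x != 0 -> `|nrm x + x1| <= al /\ `|nrm x - x1| <= al) ->
  (y != 0 -> `|nrm y + y1| <= al /\ `|nrm y - y1| <= al) ->
  `|t x y + (`|x| * `|y|) *: t x1 y1| <= `|x| * `|y| * al ^+ 2.
Proof.
move=> al0 hx hy.
have [->|xn0] := eqVneq x 0; first by rewrite t0l normr0 !mul0r scale0r addr0 normr0.
have [->|yn0] := eqVneq y 0; first by rewrite t0r normr0 !mulr0 mul0r scale0r addr0 normr0.
have [hx1 hx2] := hx xn0; have [hy1 hy2] := hy yn0.
have nx : 0 < `|x| by rewrite normr_gt0.
have ny : 0 < `|y| by rewrite normr_gt0.
have -> : t x y = (`|x| * `|y|) *: t (nrm x) (nrm y).
  by rewrite /nrm tZl tZr !scalerA mulrACA !mulfV ?gt_eqF // mul1r scale1r.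
rewrite -scalerDr normrZ ger0_norm ?mulr_ge0 //.
by apply: ler_wpM2l; [rewrite mulr_ge0 | exact: simple_sq].
Qed.

Lemma sum_bound (x1 : X) (y1 : Y) (al : R) (s : seq (X * Y)) :
  0 <= al ->
  (forall p, p \in s -> p.1 != 0 -> `|nrm p.1 + x1| <= al /\ `|nrm p.1 - x1| <= al) ->
  (forall p, p \in s -> p.2 != 0 -> `|nrm p.2 + y1| <= al /\ `|nrm p.2 - y1| <= al) ->
  `|tsum t s + pcost s *: t x1 y1| <= pcost s * al ^+ 2.
Proof.
move=> al0; elim: s => [|p s IH] hX hY.
  by rewrite tsum_nil pcost_nil scale0r addr0 normr0 mul0r.
rewrite tsum_cons pcost_cons scalerDl addrACA mulrDl.
apply: (le_trans (ler_normD _ _)); apply: lerD.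
  by apply: term_bound => // ?; [apply: hX | apply: hY]; rewrite ?mem_head.
by apply: IH => q qs; [apply: hX | apply: hY]; rewrite inE qs orbT.
Qed.

Lemma core (A : set Z) (x1 : X) (y1 : Y) (al : R) (S : Z -> nat -> seq (X * Y)) :
  0 <= al -> `|x1| = 1 -> `|y1| = 1 ->
  (forall z, A z -> `|z| = 1) ->
  (forall z n, A z -> `|z - tsum t (S z n)| <= n.+1%:R^-1 /\ pcost (S z n) <= 1 + n.+1%:R^-1) ->
  (forall z n p, A z -> p \in S z n -> p.1 != 0 -> `|nrm p.1 + x1| <= al /\ `|nrm p.1 - x1| <= al) ->
  (forall z n p, A z -> p \in S z n -> p.2 != 0 -> `|nrm p.2 + y1| <= al /\ `|nrm p.2 - y1| <= al) ->
  forall z, A z -> `|z + t x1 y1| <= al ^+ 2.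
Proof.
move=> al0 nx1 ny1 Az1 HS hX hY z Az.
have w1 : `|t x1 y1| = 1 by rewrite norm_t nx1 ny1 mulr1.
apply: (@lim_le _ _ _ (2 + al ^+ 2)) => n.
have [hz hL] := HS z n Az.
set d := n.+1%:R^-1 in hz hL *.
have d0 : 0 <= d by rewrite invr_ge0 ler0n.
set T := tsum t (S z n) in hz *.
set L := pcost (S z n) in hL *.
have hsum : `|T + L *: t x1 y1| <= L * al ^+ 2.
  exact: sum_bound al0 (fun p => hX z n p Az) (fun p => hY z n p Az).
have hT : `|T| <= L := norm_tsum_le _.
have Lge : 1 - d <= L.
  have := ler_normD (z - T) T; rewrite subrK Az1 //; lra.
have E : z + t x1 y1 = (z - T) + (T + L *: t x1 y1) + (1 - L) *: t x1 y1.
  by rewrite scalerBl scale1r (addrA (z - T)) subrK addrACA subrr addr0.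
rewrite E.
have h1 : `|(1 - L) *: t x1 y1| <= d.
  rewrite normrZ w1 mulr1 ler_norml; apply/andP; split; lra.
have h2 : L * al ^+ 2 <= (1 + d) * al ^+ 2 by apply: ler_wpM2r => //; rewrite exprn_ge0.
have := ler_normD (z - T + (T + L *: t x1 y1)) ((1 - L) *: t x1 y1).
have := ler_normD (z - T) (T + L *: t x1 y1).
lra.
Qed.

End Tensor.

Section Final.
Variables (R : realType) (K : Type) (X Y Z : completeNormedModType R)
  (t : X -> Y -> Z) (Ht : proj_tensor t) (unK : uncountable_card K).

Definition BXs (A : set Z) (S : Z -> nat -> seq (X * Y)) : set X :=
  [set u | exists z n p, [/\ A z, p \in S z n, p.1 != 0 & u = nrm p.1]].
Definition BYs (A : set Z) (S : Z -> nat -> seq (X * Y)) : set Y :=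
  [set u | exists z n p, [/\ A z, p \in S z n, p.2 != 0 & u = nrm p.2]].

Lemma nrm1 (V : normedModType R) (x : V) : x != 0 -> `|nrm x| = 1.
Proof.
move=> xn0; rewrite /nrm normrZ normfV normr_id mulVf //.
by rewrite normr_eq0.
Qed.

Lemma BX_sphere A S : BXs A S `<=` [set x | `|x| = 1].
Proof. by move=> u [z [n [p [_ _ pn0 ->]]]]; exact: nrm1. Qed.
Lemma BY_sphere A S : BYs A S `<=` [set x | `|x| = 1].
Proof. by move=> u [z [n [p [_ _ pn0 ->]]]]; exact: nrm1. Qed.

Lemma BX_card A S : card_lt_type K A -> card_lt_type K (BXs A S).
Proof.
move=> AK; apply: (card_lt_of_prod unK AK).
pose g (q : Z * nat) : X := match unpickle q.2 with
  | Some ni => nrm (nth (0, 0) (S q.1 ni.1) ni.2).1 | None => 0 end.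
apply: (@card_le_trans _ _ _ (g @` (A `*` [set: nat]))); last exact: card_image_le.
apply: subset_card_le => u [z [n [p [Az ps _ ->]]]].
exists (z, pickle (n, index p (S z n))) => //.
by rewrite /g /= pickleK /= nth_index.
Qed.

Lemma BY_card A S : card_lt_type K A -> card_lt_type K (BYs A S).
Proof.
move=> AK; apply: (card_lt_of_prod unK AK).
pose g (q : Z * nat) : Y := match unpickle q.2 with
  | Some ni => nrm (nth (0, 0) (S q.1 ni.1) ni.2).2 | None => 0 end.
apply: (@card_le_trans _ _ _ (g @` (A `*` [set: nat]))); last exact: card_image_le.
apply: subset_card_le => u [z [n [p [Az ps _ ->]]]].
exists (z, pickle (n, index p (S z n))) => //.
by rewrite /g /= pickleK /= nth_index.
Qed.

Lemma approx_exists (A : set Z) : (forall z, A z -> `|z| = 1) ->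
  exists S : Z -> nat -> seq (X * Y), forall z n, A z ->
    `|z - tsum t (S z n)| <= n.+1%:R^-1 /\ pcost (S z n) <= 1 + n.+1%:R^-1.
Proof.
move=> Asph.
have H (q : Z * nat) : exists s : seq (X * Y), A q.1 ->
    `|q.1 - tsum t s| <= q.2.+1%:R^-1 /\ pcost s <= 1 + q.2.+1%:R^-1.
  case: q => z n /=.
  have [Az|nAz] := pselect (A z); last by exists [::].
  set d := n.+1%:R^-1.
  have d0 : 0 < d by rewrite invr_gt0 ltr0n.
  have d20 : 0 < d / 2 by rewrite divr_gt0.
  have [s hs] := pt_dense Ht z d20.
  have [s' [es' hs']] := pt_norm_approx Ht s d20.
  exists s' => _; rewrite es'; split; first lra.
  have := ler_normD (tsum t s - z) z.
  rewrite subrK (Asph _ Az) distrC; lra.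
have [f Hf] := choice H.
by exists (fun z n => f (z, n)) => z n Az; exact: (Hf (z, n) Az).
Qed.

Lemma final (A : set Z) (S : Z -> nat -> seq (X * Y)) (x0 : X) (y0 : Y) (al : R) :
  0 <= al -> `|x0| = 1 -> `|y0| = 1 -> (forall z, A z -> `|z| = 1) ->
  (forall z n, A z -> `|z - tsum t (S z n)| <= n.+1%:R^-1 /\ pcost (S z n) <= 1 + n.+1%:R^-1) ->
  (forall u, BXs A S u -> `|u + x0| <= al /\ `|u - x0| <= al) ->
  (forall v, BYs A S v -> `|v + y0| <= al /\ `|v - y0| <= al) ->
  forall z, A z -> `|z + t x0 y0| <= al ^+ 2 /\ `|z - t x0 y0| <= al ^+ 2.
Proof.
move=> al0 nx0 ny0 Asph HS hX hY z Az; split.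
  apply: (core Ht al0 nx0 ny0 Asph HS) => // z' n p Az' ps pn0.
    by apply: hX; exists z', n, p.
  by apply: hY; exists z', n, p.
have nmx0 : `|- x0| = 1 by rewrite normrN.
rewrite -(tNl Ht); apply: (core Ht al0 nmx0 ny0 Asph HS) => //.
  move=> z' n p Az' ps pn0; rewrite opprK.
  have [h1 h2] : `|nrm p.1 + x0| <= al /\ `|nrm p.1 - x0| <= al.
    by apply: hX; exists z', n, p.
  by split.
by move=> z' n p Az' ps pn0; apply: hY; exists z', n, p.
Qed.

End Final.

Theorem theorem4p4 (R : realType) (K : Type) (X Y Z : completeNormedModType R)
    (t : X -> Y -> Z) :
  uncountable_card K -> proj_tensor t ->
  (ASQ_lt K X -> ASQ_lt K Y -> ASQ_lt K Z) /\
  (SQ_lt K X -> SQ_lt K Y -> SQ_lt K Z).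
Proof.
move=> unK Ht; split.
- move=> aX aY A Asph AK eps eps0.
  have Asph' : forall z, A z -> `|z| = 1 by move=> z /Asph.
  have [S HS] := approx_exists Ht Asph'.
  have [eta [eta0 eta1 eta3]] : exists eta : R, [/\ 0 < eta, eta <= 1 & 3 * eta <= eps].
    have [h|h] := lerP 1 (eps / 3).
      by exists 1; split => //; move: h; rewrite ler_pdivlMr //; lra.
    exists (eps / 3); split; [by rewrite divr_gt0 | exact: ltW | lra].
  have [x0 [nx0 hx0]] := aX _ (BX_sphere (S:=S) (A:=A)) (BX_card unK S AK) eta eta0.
  have [y0 [ny0 hy0]] := aY _ (BY_sphere (S:=S) (A:=A)) (BY_card unK S AK) eta eta0.
  exists (t x0 y0); split; first by rewrite (norm_t Ht) nx0 ny0 mulr1.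
  move=> z Az.
  have al0 : 0 <= 1 + eta by lra.
  have [h1 h2] := final Ht al0 nx0 ny0 Asph' HS hx0 hy0 Az.
  have e : (1 + eta) ^+ 2 <= 1 + eps.
    rewrite expr2; have : eta * eta <= eta by rewrite ler_piMl // ltW.
    lra.
  by split; apply: le_trans e.
- move=> aX aY A Asph AK.
  have Asph' : forall z, A z -> `|z| = 1 by move=> z /Asph.
  have [S HS] := approx_exists Ht Asph'.
  have [x0 [nx0 hx0]] := aX _ (BX_sphere (S:=S) (A:=A)) (BX_card unK S AK).
  have [y0 [ny0 hy0]] := aY _ (BY_sphere (S:=S) (A:=A)) (BY_card unK S AK).
  exists (t x0 y0); split; first by rewrite (norm_t Ht) nx0 ny0 mulr1.
  move=> z Az.
  have [h1 h2] := final Ht ler01 nx0 ny0 Asph' HS hx0 hy0 Az.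
  by rewrite -(expr1n _ 2) ; split.
Qed.
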